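(* Let $\tau$ be a veering triangulation of $M$. If $\alpha\in H_2(M,\partial M;\mathbb{Z})$ is carried by $\tau^{(2)}$ (i.e. $\alpha$, viewed in $H_2(M,\partial M;\mathbb{R})$, is represented by a nonnegative real cycle on the faces of $\tau$), then $\alpha$ is represented by a nonnegative integral cycle on the faces of $\tau$, and hence by an embedded oriented surface carried by $\tau^{(2)}$.
   Context: $M$ is an oriented 3-manifold which is the interior of a compact 3-manifold with nonempty boundary consisting of tori; $(M,\partial M)$ denotes the compact manifold obtained by truncating the ideal vertices, with its boundary. An ideal triangulation of $M$ is taut if each face is cooriented so that every ideal tetrahedron has exactly two faces whose coorientation points into it (bottom faces) and two pointing out (top faces), and, giving an edge of a tetrahedron angle $\pi$ if the coorientations of its two adjacent faces in that tetrahedron agree and $0$ otherwise, the angle sum around every edge of the triangulation is $2\pi$. A veering triangulation is a taut ideal triangulation whose edges are labeled right- or left-veering so that each tetrahedron admits an orientation-preserving isomorphism to the model veering tetrahedron: a thickened rhombus in $\mathbb{R}^2\times\mathbb{R}$ whose top edge (a diagonal) lies above its bottom edge (the other diagonal), whose four side edges are right-veering if of positive slope and left-veering if of negative slope. With the coorientations, the 2-skeleton $\tau^{(2)}$ is a transversely oriented branched surface whose branch locus is the union of edges. A nonnegative cycle on $\tau^{(2)}$ is an assignment of nonnegative weights to faces satisfying the matching conditions: for each edge $e$, the faces incident to $e$ are divided into the two sides of $e$, and the sum of weights on one side equals the sum on the other side; such a cycle defines a class in $H_2(M,\partial M;\mathbb{R})$. An oriented properly embedded surface is carried by $\tau^{(2)}$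 if it lies in a fibered neighborhood of $\tau^{(2)}$ positively transverse to the $I$-fibers. *)

(* Defs.v *)
From HB Require Import structures.
From mathcomp Require Import all_boot all_order all_algebra all_fingroup.
From mathcomp Require Import reals.
Set Implicit Arguments. Unset Strict Implicit. Unset Printing Implicit Defensive.
Import Order.TTheory GRing.Theory Num.Theory.

(* Each tetrahedron has vertices labelled 0..3 ('I_4); face k of a          *)
(* tetrahedron is the face opposite vertex k.  A tetrahedron-face x=(t,k)   *)
(* is glued to glue x = (t',k') via the vertex bijection gperm x : 'I_4 ->  *)
(* 'I_4 (sending k to k' and the vertices of face k to those of face k').   *)
(* Orientation convention: every tetrahedron is oriented by its vertex      *)
(* order (0,1,2,3); the manifold is oriented consistently iff every gluing  *)
(* permutation is odd.                                                      *)

Record triangulation := Triangulation {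
  tet : finType;
  glue : tet * 'I_4 -> tet * 'I_4;
  gperm : tet * 'I_4 -> {perm 'I_4}
}.

Section Defs.
Variable T : triangulation.
Local Notation TT := (tet T).

(* oriented tetrahedron-edges (t, i, j): the edge from vertex i to j of t *)
Definition edge_step (e e' : TT * 'I_4 * 'I_4) : bool :=
  let: (t, i, j) := e in
  [exists k : 'I_4, [&& k != i, k != j, i != j &
     e' == ((glue (t, k)).1, gperm (t, k) i, gperm (t, k) j)]].

Definition edge_eq : rel (TT * 'I_4 * 'I_4) := connect edge_step.

Definition ideal_triangulation : Prop :=
  [/\ forall x : TT * 'I_4, glue (glue x) = x,
      forall x : TT * 'I_4, glue x != x,
      forall x : TT * 'I_4, gperm x x.2 = (glue x).2,
      forall x : TT * 'I_4, gperm (glue x) = (gperm x)^-1%g &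
   [/\ forall x : TT * 'I_4, odd_perm (gperm x) &
      forall (t : TT) (i j : 'I_4), i != j -> ~~ edge_eq (t, i, j) (t, j, i)]].

(* Coorientations: top x = true iff the coorientation of face x points out
   of the tetrahedron x.1 (x is a top face of x.1). *)
Definition pi_angle (top : TT * 'I_4 -> bool) (e : TT * 'I_4 * 'I_4) : bool :=
  let: (t, i, j) := e in
  [forall k : 'I_4, forall l : 'I_4,
     [&& k != i, k != j, l != i & l != j] ==> (top (t, k) == top (t, l))].

Definition taut (top : TT * 'I_4 -> bool) : Prop :=
  [/\ forall x : TT * 'I_4, top (glue x) = ~~ top x,
      forall t : TT, #|[set k : 'I_4 | top (t, k)]| = 2%N &
      (* angle sum 2 pi around every edge: exactly two angles pi *)
      forall (t : TT) (i j : 'I_4), i != j ->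
        #|[set e' | edge_eq (t, i, j) e' && pi_angle top e']| = 2%N].

Definition even4 (a b c d : 'I_4) : bool :=
  ~~ odd ((b < a) + (c < a) + (d < a) + (c < b) + (d < b) + (d < c))%N.

(* Model veering tetrahedron:
   rhombus with vertices W=(-1,0), E=(1,0) (top diagonal WE, at height 1),
   S=(0,-1), N=(0,1) (bottom diagonal SN, at height 0); (W,E,S,N) is
   positively oriented; positive-slope sides WN, ES are right-veering,
   negative-slope sides NE, SW are left-veering.  An orientation preserving
   isomorphism sends (W,E,S,N) to an even sequence (a,b,c,d) of vertices of t,
   the top faces (those containing the top edge ab) being opposite c and d. *)
Definition veering (top : TT * 'I_4 -> bool)
    (right : TT * 'I_4 * 'I_4 -> bool) : Prop :=
  [/\ taut top,
      forall (t : TT) (i j : 'I_4), right (t, i, j) = right (t, j, i),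
      forall e e', edge_eq e e' -> right e = right e' &
      forall t : TT, exists a b c d : 'I_4,
        [/\ uniq [:: a; b; c; d], even4 a b c d,
            [/\ ~~ top (t, a), ~~ top (t, b), top (t, c) & top (t, d)] &
            [/\ right (t, a, d), right (t, b, c),
                ~~ right (t, a, c) & ~~ right (t, b, d)]]].

(* A weight function is w : TT * 'I_4 -> V with w (glue x) = w x (one value *)
(* per face of the triangulation).  Faces are oriented by their             *)
(* coorientation together with the orientation of M.                        *)

Definition fourth (k i j : 'I_4) : 'I_4 :=
  odflt k [pick l : 'I_4 | [&& l != k, l != i & l != j]].

(* side of the edge (t,i,j) on which face (t,k) lies: +1 / -1 (this is the
   coefficient of the oriented edge i->j in the boundary of the
   coorientation-oriented face) *)
Definition fsign (top : TT * 'I_4 -> bool) (t : TT) (k i j : 'I_4) : int :=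
  ((if top (t, k) then 1 else -1) *
   (if even4 k i j (fourth k i j) then 1 else -1))%R.

Definition is_cycle (R : pzRingType) (top : TT * 'I_4 -> bool)
    (w : TT * 'I_4 -> R) : Prop :=
  (forall x : TT * 'I_4, w (glue x) = w x) /\
  forall (t0 : TT) (i0 j0 : 'I_4), i0 != j0 ->
    (\sum_(f : TT * 'I_4 * 'I_4 | edge_eq (t0, i0, j0) f)
       \sum_(k : 'I_4 | (k != f.1.2) && (k != f.2))
          (fsign top f.1.1 k f.1.2 f.2)%:~R * w (f.1.1, k) = 0)%R.

Definition bd (top : TT * 'I_4 -> bool) (t : TT) (x : TT * 'I_4) : int :=
  (\sum_(k : 'I_4 | ((t, k) == x) || (glue (t, k) == x))
     (if top (t, k) then 1 else -1))%R.

End Defs.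

(* Main.v *)
Require Import Defs.
From HB Require Import structures.
From mathcomp Require Import all_boot all_order all_algebra all_fingroup.
From mathcomp Require Import reals.
From mathcomp Require Import ring lra zify.
Import Order.TTheory GRing.Theory Num.Theory.
Local Open Scope ring_scope.

Ltac ord4 x := case: x => [[|[|[|[|//]]]] ?].

Definition tf (x y a : 'I_4) := if a == x then y else if a == y then x else a.

Lemma F2 (k i j l m : 'I_4) : uniq[::k;i;j;l] -> uniq [::k;i;j;m] -> l = m.
Proof. ord4 k; ord4 i; ord4 j; ord4 l; ord4 m; by [|move=> _ _; apply/val_inj]. Qed.

Lemma F1 (k i j : 'I_4) : uniq[::k;i;j] -> exists l : 'I_4, uniq [::k;i;j;l].
Proof. ord4 k; ord4 i; ord4 j => //= _;
 first [ by exists (@Ordinal 4 0 isT) | by exists (@Ordinal 4 1 isT)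
       | by exists (@Ordinal 4 2 isT) | by exists (@Ordinal 4 3 isT)].
Qed.

Lemma T2 (a b c d x y : 'I_4) : uniq [:: a; b; c; d] -> x != y ->
  even4 (tf x y a) (tf x y b) (tf x y c) (tf x y d) = ~~ even4 a b c d.
Proof. ord4 a; ord4 b; ord4 c; ord4 d => //; ord4 x; ord4 y => //. Qed.

Lemma U1 (a b c d : 'I_4) : uniq [::a;b;c;d] -> uniq [::d;b;c;a].
Proof. by ord4 a; ord4 b; ord4 c; ord4 d. Qed.
Lemma U2 (a b c d : 'I_4) : uniq [::a;b;c;d] -> uniq [::a;b;c].
Proof. by ord4 a; ord4 b; ord4 c; ord4 d. Qed.
Lemma F0 (i j : 'I_4) : i != j -> exists k : 'I_4, uniq [::k;i;j].
Proof. ord4 i; ord4 j => //= _;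
 first [ by exists (@Ordinal 4 0 isT) | by exists (@Ordinal 4 1 isT)
       | by exists (@Ordinal 4 2 isT) | by exists (@Ordinal 4 3 isT)].
Qed.
Lemma F3 (k1 i j k2 k : 'I_4) : uniq [::k1;i;j;k2] -> k != i -> k != j -> k != k1 -> k = k2.
Proof. ord4 k1; ord4 i; ord4 j; ord4 k2 => //; ord4 k => //= *; exact: val_inj. Qed.
Arguments U1 {a b c d}. Arguments U2 {a b c d}. Arguments F0 {i j}. Arguments F3 {k1 i j k2 k}.
Arguments F1 {k i j}. Arguments F2 {k i j l m}.



Lemma fourthP (k i j : 'I_4) : uniq [::k;i;j] -> uniq [::k;i;j; fourth k i j].
Proof.
move=> u; rewrite /fourth; case: pickP => [l /and3P[h1 h2 h3] | H].
  move: u; rewrite /= !inE !negb_or (eq_sym k l) (eq_sym i l) (eq_sym j l) h1 h2 h3.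
  by rewrite !andbT.
have [l ul] := F1 u.
move: (H l) ul; rewrite /= !inE !negb_or (eq_sym k l) (eq_sym i l) (eq_sym j l).
by case: (l != k); case: (l != i); case: (l != j); rewrite ?andbF.
Qed.

Arguments fourthP {k i j}.
Lemma fourth_unique (k i j m : 'I_4) : uniq [::k;i;j;m] -> fourth k i j = m.
Proof.
move=> u; apply: (@F2 k i j _ m _ u); apply: fourthP.
by move: u; rewrite /= !inE !negb_or; case/and4P => /and3P[-> -> _] /andP[-> _] _ _.
Qed.

Arguments fourth_unique {k i j m}.
Lemma fourth_perm (p : {perm 'I_4}) k i j : uniq [::k;i;j] ->
  fourth (p k) (p i) (p j) = p (fourth k i j).
Proof.
move=> u; apply: fourth_unique.
have := fourthP u; rewrite -(map_inj_uniq (@perm_inj _ p)) //.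
Qed.

Lemma even4_perm (p : {perm 'I_4}) a b c d : uniq [::a;b;c;d] ->
  even4 (p a) (p b) (p c) (p d) = even4 a b c d (+) odd_perm p.
Proof.
case: (prod_tpermP p) => ts -> {p}.
elim: ts a b c d => [|[x y] ts IH] a b c d /=.
  by move=> _ _; rewrite big_nil odd_perm1 !perm1 addbF.
case/andP=> hxy hts u; rewrite big_cons !permM odd_permM odd_tperm hxy.
have tE z : tperm x y z = tf x y z by rewrite permE /tf /=.
rewrite !tE IH //; last first.
  have -> : [:: tf x y a; tf x y b; tf x y c; tf x y d] = map (tperm x y) [:: a; b; c; d].
    by rewrite /= !tE.
  by rewrite map_inj_uniq //; apply: perm_inj.
by rewrite T2 // addNb addbN.
Qed.

Definition evs (k i j : 'I_4) : int := if even4 k i j (fourth k i j) then 1 else -1.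

Lemma evs_perm (p : {perm 'I_4}) k i j : odd_perm p -> uniq [::k;i;j] ->
  evs (p k) (p i) (p j) = - evs k i j.
Proof.
move=> op u; rewrite /evs fourth_perm // even4_perm ?op ?addbT; last exact: fourthP.
by case: (even4 _ _ _ _).
Qed.

Definition G4 (i j k : 'I_4) : int := if (k != i) && (k != j) then evs k i j else 0.

Lemma sum_evs (i j : 'I_4) : i != j ->
   (\sum_(k < 4 | (k != i) && (k != j)) evs k i j) = 0.
Proof.
move=> Hij; have [k1 u1] := F0 Hij.
set k2 := fourth k1 i j.
have u2 : uniq [:: k1; i; j; k2] by exact: fourthP.
have u3 : uniq [:: k2; i; j; k1] by exact: U1.
have p1 : (k1 != i) && (k1 != j) by move: u1; rewrite /= !inE !negb_or => /andP[/andP[-> ->] _].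
have p2 : (k2 != i) && (k2 != j) by move: (U2 u3); rewrite /= !inE !negb_or => /andP[/andP[-> ->] _].
have d12 : k2 != k1 by move: u3; rewrite /= !inE !negb_or => /andP[/and3P[_ _ ->] _].
rewrite (bigD1 k1) //= (bigD1 k2) /=; last by rewrite p2 d12.
rewrite big1 ?addr0; last first.
  move=> k /andP[/andP[/andP[hi hj] h1] h2].
  by move: h2; rewrite (F3 u2 hi hj h1) eqxx.
rewrite /evs (fourth_unique u3) -/k2.
have := @even4_perm (tperm k1 k2) _ _ _ _ u2.
rewrite tpermL tpermR !tpermD ?odd_tperm 1?eq_sym ?d12.
- by move=> ->; case: (even4 _ _ _ _).
all: move: u2; rewrite /= !inE !negb_or.
all: by case/andP=> /and3P[h1 h2 h3] /andP[/andP[h4 h5] /andP[h6 _]]; rewrite ?h1 ?h2 ?h3 ?h4 ?h5 ?h6 // eq_sym.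
Qed.

Definition sg (b : bool) : int := if b then 1 else -1.

Section Tri.
Variable T : triangulation.
Variable top : tet T * 'I_4 -> bool.
Hypothesis Hinv : forall x : tet T * 'I_4, glue (glue x) = x.
Hypothesis Hne : forall x : tet T * 'I_4, glue x != x.
Hypothesis Htop : forall x : tet T * 'I_4, top (glue x) = ~~ top x.

Lemma bd_val t y : bd top t y =
  (if t == y.1 then sg (top y) else 0) - (if t == (glue y).1 then sg (top y) else 0).
Proof.
rewrite /bd (bigID (fun k => (t, k) == y)) /=.
rewrite (eq_bigl (fun k => (t, k) == y)); last by move=> k; case: ((t,k) == y); rewrite ?andbF ?andbT.
rewrite [X in _ + X](eq_bigl (fun k => (t, k) == glue y)); last first.
  move=> k /=; rewrite (inv_eq Hinv); case: eqP => [->|] /=; first by rewrite eq_sym (negbTE (Hne y)).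
  by rewrite andbT.
case: y => s m /=.
have Hg := Htop (s, m); have Hn := Hne (s, m).
case eg: (glue (s, m)) Hg Hn => [s' m'] /= Hg Hn.
have sum1 (a : tet T) (b : 'I_4) : \sum_(k < 4 | (t, k) == (a, b)) (if top (t, k) then 1 else -1)
    = if t == a then (if top (t, b) then 1 else -1) else 0 :> int.
  case: (eqVneq t a) => [->|hta].
    by rewrite (big_pred1 b) // => k; rewrite /= xpair_eqE eqxx.
  by rewrite big_pred0 // => k; rewrite xpair_eqE (negbTE hta).
rewrite !sum1 /sg.
case: (eqVneq t s) => [et|hts]; case: (eqVneq t s') => [e|hts'] //; subst; rewrite ?Hg.
all: case: (top _) => /=; rewrite ?subr0 ?addr0 ?add0r ?sub0r ?subrr ?addrN ?addNr ?opprK //.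
Qed.

Lemma bd_glue t y : bd top t (glue y) = bd top t y.
Proof.
rewrite !bd_val Hinv Htop /sg.
by case: (top y); case: (t == y.1); case: (t == (glue y).1) => /=; rewrite ?subrr ?sub0r ?subr0 ?opprK.
Qed.

Lemma bd_sum (R : comPzRingType) (a : tet T -> R) y :
  \sum_t a t * (bd top t y)%:~R = (sg (top y))%:~R * (a y.1 - a (glue y).1).
Proof.
have E (b : bool) (u : R) (s : int) : u * (if b then s else 0)%:~R = if b then u * s%:~R else 0.
  by case: b; rewrite ?mulr0.
under eq_bigr => t _ do rewrite bd_val intrB mulrBr !E.
rewrite sumrB -!big_mkcond !big_pred1_eq.
by rewrite mulrBr ![_ * (sg _)%:~R]mulrC.
Qed.

Lemma step_neq (f f' : tet T * 'I_4 * 'I_4) : edge_step f f' -> f'.1.2 != f'.2.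
Proof.
case: f => [[s i] j] /existsP[k /and4P[_ _ hij /eqP ->]] /=.
by rewrite (inj_eq (@perm_inj _ _)).
Qed.

Lemma edge_eq_neq t0 i0 j0 (f : tet T * 'I_4 * 'I_4) : i0 != j0 -> edge_eq (t0, i0, j0) f -> f.1.2 != f.2.
Proof.
move=> h /connectP[p pth ->].
have h' : (t0, i0, j0).1.2 != (t0, i0, j0).2 := h.
move: (t0, i0, j0) h' pth.
elim: p => [|y p IH] x hx /=; first by [].
case/andP=> sxy pth; exact: IH (step_neq _ _ sxy) pth.
Qed.

Hypothesis Hperm : forall x : tet T * 'I_4, gperm x x.2 = (glue x).2.
Hypothesis Hgp : forall x : tet T * 'I_4, gperm (glue x) = (gperm x)^-1%g.
Hypothesis Hodd : forall x : tet T * 'I_4, odd_perm (gperm x).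

Definition phi (p : tet T * 'I_4 * 'I_4 * 'I_4) : tet T * 'I_4 * 'I_4 * 'I_4 :=
  let: (s, i, j, k) := p in let g := gperm (s, k) in ((glue (s, k)).1, g i, g j, g k).

Lemma phiK : involutive phi.
Proof.
case=> [[[s i] j] k] /=.
have e1 := Hperm (s, k); rewrite /= in e1.
by rewrite e1 -surjective_pairing Hperm Hinv Hgp !permK.
Qed.

Lemma term_eq t s k i j : (fsign top s k i j)%:~R * bd top t (s, k) =
  evs k i j * ((t == s)%:R - (t == (glue (s, k)).1)%:R).
Proof.
rewrite intz bd_val /fsign /evs /sg /=.
by case: (top _); case: (even4 _ _ _ _); case: (t == s); case: (t == _) => /=;
  rewrite ?(subrr, sub0r, subr0, opprK, mulr1, mul1r, mulr0, mulN1r, mulrN1, opprB, mulrN, mulNr).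
Qed.


Definition Pd t0 i0 j0 (p : tet T * 'I_4 * 'I_4 * 'I_4) :=
  edge_eq (t0, i0, j0) p.1 && ((p.2 != p.1.1.2) && (p.2 != p.1.2)).

Lemma Pphi t0 i0 j0 p : i0 != j0 -> Pd t0 i0 j0 p -> Pd t0 i0 j0 (phi p).
Proof.
move=> hij; case: p => [[[s i] j] k] /andP[/= Hf /andP[/= hki hkj]].
rewrite /Pd /= !(inj_eq (@perm_inj _ _)) hki hkj !andbT.
move: Hf; rewrite /edge_eq => Hf; apply: (connect_trans Hf); apply: connect1.
apply/existsP; exists k; rewrite hki hkj eqxx andbT /=.
exact: (edge_eq_neq _ _ _ _ hij Hf).
Qed.

Lemma Lbd t t0 i0 j0 : i0 != j0 ->
  \sum_(f | edge_eq (t0, i0, j0) f) \sum_(k | (k != f.1.2) && (k != f.2))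
     (fsign top f.1.1 k f.1.2 f.2)%:~R * bd top t (f.1.1, k) = 0.
Proof.
move=> hij.
have S1 : \sum_(f | edge_eq (t0, i0, j0) f) \sum_(k | (k != f.1.2) && (k != f.2))
     evs k f.1.2 f.2 * (t == f.1.1)%:R = 0.
  rewrite big1 // => f Hf; rewrite -big_distrl /= sum_evs ?mul0r //.
  exact: (edge_eq_neq _ _ _ _ hij Hf).
under eq_bigr => f _ do (under eq_bigr => k _ do rewrite term_eq mulrBr; rewrite sumrB).
rewrite sumrB S1 sub0r; apply/eqP; rewrite oppr_eq0; apply/eqP.
rewrite pair_big_dep (reindex_inj (inv_inj phiK)) /=.
rewrite (eq_bigl (Pd t0 i0 j0)); last first.
  move=> p; apply/idP/idP => H.
    by rewrite -[p]phiK; apply: Pphi.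
  exact: Pphi.
rewrite (eq_bigr (fun p => - (evs p.2 p.1.1.2 p.1.2 * (t == p.1.1.1)%:R))); last first.
  case=> [[[s i] j] k] /andP[Hf /andP[hki hkj]] /=.
  have e1 := Hperm (s, k); rewrite /= in e1.
  rewrite /= in Hf hki hkj.
  rewrite e1 -surjective_pairing Hinv -e1 evs_perm ?mulNr //.
  by rewrite /= !inE negb_or hki hkj (edge_eq_neq _ _ _ _ hij Hf).
rewrite sumrN; apply/eqP; rewrite oppr_eq0; apply/eqP.
rewrite pair_big_dep in S1; exact: S1.
Qed.

End Tri.

Lemma floor_diff (R : realType) (z : int) (a b : R) :
  0 <= z%:~R + (a - b) -> 0 <= z + (Num.floor a - Num.floor b).
Proof.
move=> H; rewrite leNgt; apply/negP => H2.
have H3 : z + (Num.floor a - Num.floor b) + 1 <= 0 by lia.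
have H4 : ((z + (Num.floor a - Num.floor b) + 1)%:~R : R) <= 0 by rewrite lerz0.
rewrite !intrD in H4. rewrite ?intrB ?rmorphB /= in H4.
have /andP[_ ha] := floor_itv a.
have /andP[hb _] := floor_itv b.
rewrite intrD in ha.
lra.
Qed.

Theorem mainTheorem1 (R : realType) (T : triangulation)
    (top : tet T * 'I_4 -> bool) (right : tet T * 'I_4 * 'I_4 -> bool) :
  ideal_triangulation T -> (0 < #|tet T|)%N -> veering top right ->
  forall z : tet T * 'I_4 -> int, is_cycle top z ->
  (exists w : tet T * 'I_4 -> R,
     [/\ is_cycle top w, (forall x, 0 <= w x) &
         exists c : tet T -> R,
           forall x, w x - (z x)%:~R = \sum_(t : tet T) c t * (bd top t x)%:~R]) ->
  exists v : tet T * 'I_4 -> int,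
    [/\ is_cycle top v, (forall x, 0 <= v x) &
        exists n : tet T -> int,
          forall x, v x - z x = \sum_(t : tet T) n t * bd top t x].
Proof.
move=> [Hinv Hne Hperm Hgp [Hodd _]] _ [[Htop _ _] _ _ _] z [Hzg Hzc] [w [_ Hw0 [c Hc]]].
pose n t := Num.floor (c t).
have bdI x : \sum_t n t * bd top t x = \sum_t n t * (bd top t x)%:~R.
  by apply: eq_bigr => t _; rewrite intz.
exists (fun x => z x + \sum_t n t * bd top t x); split.
- split.
    by move=> x; rewrite Hzg; congr (_ + _); apply: eq_bigr => t _; rewrite bd_glue.
  move=> t0 i0 j0 hij.
  under eq_bigr => f _ do (under eq_bigr => k _ do rewrite mulrDr mulr_sumr; rewrite big_split /=).
  rewrite big_split /= Hzc // add0r.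
  under eq_bigr => f _ do rewrite exchange_big /=.
  rewrite exchange_big /= big1 // => t _.
  under eq_bigr => f _ do (under eq_bigr => k _ do rewrite mulrCA; rewrite -mulr_sumr).
  by rewrite -mulr_sumr Lbd // mulr0.
- move=> x; rewrite bdI bd_sum //.
  have := Hc x; rewrite bd_sum // => Hx.
  have H0 : 0 <= (z x)%:~R + (sg (top x))%:~R * (c x.1 - c (glue x).1) :> R.
    by rewrite -Hx addrC subrK.
  rewrite /sg; case: (top x) H0 => /= H0.
    by rewrite mul1r; apply: floor_diff; rewrite mul1r in H0.
  rewrite mulN1r opprB; apply: floor_diff; by rewrite mulN1r opprB in H0.
- by exists n => x; rewrite addrC addKr.
Qed.
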